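(* Let $n\ge 3$ and $f=x^n+a_{n-1}x^{n-1}+\cdots+a_0\in\mathbb{C}[x]$ with roots $r_1,\ldots,r_n$ (with multiplicity). For each integer $m$ put $\varphi_m(x)=f^{(m)}(x)/m!$ if $1\le m\le n$ and $\varphi_m=0$ if $m\le 0$ or $m>n$. Let $M$ be the infinite matrix with entries $M_{2s-1,l}=\varphi_{2(l-s)+2}$, $M_{2s,l}=\varphi_{2(l-s)+1}$ ($s,l\ge1$), and let $H(x)$ be its $(n-2)$th leading principal minor. If indices $i,j,k\in\{1,\ldots,n\}$ satisfy $i<j$, $j\ne k$, $k\ne i$ and $r_k=(r_i+r_j)/2$, then $H(r_k)=0$.
   Context: $f^{(m)}$ is the $m$th derivative of $f$ with respect to $x$. *)

(* Defs.v *)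
From Stdlib Require Reals.
From HB Require Import structures.
From mathcomp Require Import all_boot all_order all_algebra.
From mathcomp Require Import complex.
From mathcomp Require Import Rstruct.

Set Implicit Arguments. Unset Strict Implicit. Unset Printing Implicit Defensive.
Import Order.TTheory GRing.Theory Num.Theory.
Local Open Scope ring_scope.

Definition C : numClosedFieldType := (Rdefinitions.R)[i].

Definition phi (n : nat) (f : {poly C}) (m : int) : {poly C} :=
  match m with
  | Posz k => if (1 <= k <= n)%N then f^`N(k) else 0
  | Negz _ => 0
  end.

(* Entry M_{r,l} of the infinite matrix (1-based indices r, l >= 1):
   M_{2s-1,l} = phi_{2(l-s)+2},  M_{2s,l} = phi_{2(l-s)+1}. *)
Definition Mentry (n : nat) (f : {poly C}) (r l : nat) : {poly C} :=
  if odd r then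
    let s := (r.+1)./2 in phi n f (2 * (l%:Z - s%:Z) + 2)
  else
    let s := r./2 in phi n f (2 * (l%:Z - s%:Z) + 1).

Definition Hpoly (n : nat) (f : {poly C}) : {poly C} :=
  \det (\matrix_(i < n - 2, j < n - 2) Mentry n f i.+1 j.+1).

(* Main.v *)
Require Import Defs.
From HB Require Import structures.
From mathcomp Require Import all_boot all_order all_algebra.
From mathcomp Require Import complex.
From mathcomp Require Import Rstruct.
From mathcomp Require Import zify ring.
Import Order.TTheory GRing.Theory Num.Theory.
Local Open Scope ring_scope.

Lemma tele (u : C) (a : nat -> C) K :
  \sum_(0 <= m < K.+1) u ^+ m * ((if m is m'.+1 then a m' else 0) - u * a m)
  = - (u ^+ K.+1 * a K).
Proof.
under eq_bigr => m _ do rewrite mulrBr.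
rewrite sumrB big_nat_recl // big_nat_recr //= mulr0 add0r.
rewrite opprD addrA.
have -> : \sum_(0 <= i < K) u ^+ i.+1 * a i = \sum_(0 <= i < K) u ^+ i * (u * a i).
  by apply: eq_bigr => i _; rewrite exprS mulrCA mulrA.
by rewrite subrr add0r exprS mulrCA mulrA.
Qed.

Lemma shift_sum (u : C) (G : nat -> C) s L : (s <= L)%N ->
  \sum_(0 <= l < L) u ^+ l * (if (s <= l)%N then G (l - s)%N else 0)
  = u ^+ s * \sum_(0 <= m < L - s) u ^+ m * G m.
Proof.
move=> sL; rewrite (big_cat_nat (n := s)) //=.
rewrite big_nat_cond big1 ?add0r; last first.
  by move=> i /andP[/andP[_ hi] _]; rewrite leqNgt hi mulr0.
rewrite -{1}(add0n s) big_addn mulr_sumr; apply: eq_bigr => i _.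
by rewrite leq_addl addnK exprD mulrCA mulrA.
Qed.
Lemma taylor_coef (p : {poly C}) (c : C) k :
  (p \Po ('X + c%:P))`_k = p^`N(k).[c].
Proof.
elim/poly_ind: p k => [|p a IH] k.
  by rewrite comp_poly0 coef0 nderivn_poly0 ?size_poly0 ?horner0.
rewrite comp_polyD comp_polyM comp_polyX comp_polyC mulrDr coefD coefD coefMX coefMC coefC.
case: k => [|k] /=; idtac.
all: idtac.
  by rewrite nderivn0 !hornerE IH nderivn0.
have := nderivnMXaddC k p a => ->.
by rewrite !hornerE !IH.
Qed.

Theorem lemma1 (n : nat) (r : 'I_n -> C) (i j k : 'I_n) :
  (3 <= n)%N ->
  let f := \prod_(t < n) ('X - (r t)%:P) in
  (i < j)%N -> j != k -> k != i ->
  r k = (r i + r j) / 2 ->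
  (Hpoly n f).[r k] = 0.
Proof.
move=> n3 f ltij njk nki hk.
set c := r k; set d := (r j - r i) / 2; set u := d ^+ 2.
set g := f \Po ('X + c%:P).
have [Q fQ] : exists Q, f = ('X - (r i)%:P) * ('X - (r j)%:P) * ('X - (r k)%:P) * Q.
  have nji : j != i by rewrite neq_ltn ltij orbT.
  rewrite /f (bigD1 i) //= (bigD1 j) //= (bigD1 k) /=; last by rewrite nki eq_sym.
  by eexists; rewrite !mulrA.
have [q gq] : exists q, g = 'X * (('X^2 - u%:P) * q).
  exists (Q \Po ('X + c%:P)).
  rewrite /g fQ !comp_polyM !comp_polyB !comp_polyX !comp_polyC.
  have ei : r i = c - d by rewrite /c /d hk; field.
  have ej : r j = c + d by rewrite /c /d hk; field.
  rewrite ei ej /u /c polyCB polyCD rmorphXn; ring.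
have sf : size f = n.+1.
  rewrite /f size_prod_XsubC; congr _.+1.
  by rewrite [index_enum _]unlock -enumT size_enum_ord.
have sg : size g = n.+1 by rewrite /g size_comp_poly2 ?size_XaddC.
have sq : (size q <= n.+1)%N.
  have [->|q0] := eqVneq q 0; first by rewrite size_poly0.
  rewrite -sg; apply: dvdp_leq; first by rewrite -size_poly_eq0 sg.
  by rewrite gq; apply/dvdp_mull/dvdp_mull/dvdpp.
have g0 : g`_0 = 0 by rewrite gq coefXM.
have gbig : forall m, (n < m)%N -> g`_m = 0.
  by move=> m hm; rewrite nth_default // sg.
have gcoef : forall m e, (e <= 1)%N -> g`_(2 * m + e).+1
    = (if m is m'.+1 then q`_(2 * m'+e) else 0) - u * q`_(2 * m+e).
  move=> m e he; rewrite gq coefXM /= mulrBl coefB coefXnM coefCM.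
  case: m => [|m]; first by case: e he => [|[|]].
  have -> : (2 * m.+1 + e < 2)%N = false by lia.
  by congr (q`_ _ - _); lia.
have Szero : forall e K, (e <= 1)%N -> (n <= K)%N ->
    \sum_(0 <= m < K) u ^+ m * g`_(2 * m + e).+1 = 0.
  move=> e [|K] he hK; first lia.
  under eq_bigr => m _ do rewrite gcoef //.
  rewrite tele nth_default ?mulr0 ?oppr0 //. apply: (leq_trans sq). lia.
have phic : forall z : int,
    (phi n f z).[c] = (match z with Posz m => g`_m | Negz _ => 0 end).
  case=> [m|m]; last by rewrite /= horner0.
  case: m => [|m]; first by rewrite /= horner0 g0.
  rewrite /phi; case: ifP => hm; first by rewrite /g taylor_coef.
  by rewrite horner0 gbig //; lia.
have gamarg : forall (z : int) l s e, (e <= 1)%N ->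
    z = 2 * (l%:Z - s%:Z) + (e.+1)%:Z ->
    (match z with Posz m => g`_m | Negz _ => 0 end)
    = if (s <= l)%N then g`_(2 * (l - s) + e).+1 else 0.
  move=> z l s e he ->; case: leqP => hls.
    have -> : 2 * (l%:Z - s%:Z) + (e.+1)%:Z = Posz (2 * (l - s) + e).+1 by lia.
    done.
  case E: (2 * (l%:Z - s%:Z) + (e.+1)%:Z) => [m|m] //.
  have -> : m = 0%N by lia.
  exact: g0.
have rowz : forall s e, (e <= 1)%N -> (2 * s + (1 - e) < n - 2)%N ->
    \sum_(0 <= l < n - 2) u ^+ l * (if (s <= l)%N then g`_(2 * (l - s) + e).+1 else 0) = 0.
  move=> s e he hs.
  have -> : \sum_(0 <= l < n - 2) u ^+ l * (if (s <= l)%N then g`_(2 * (l - s) + e).+1 else 0)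
     = \sum_(0 <= l < n - 2 + n) u ^+ l * (if (s <= l)%N then g`_(2 * (l - s) + e).+1 else 0).
    symmetry; rewrite (big_cat_nat (n := n - 2) (p := n - 2 + n)) //= ?leq_addr //.
    rewrite [X in _ + X = _]big_nat_cond [X in _ + X = _]big1 ?addr0 //.
    move=> l /andP[/andP[h1 h2] _]; case: ifP => hsl; last by rewrite mulr0.
    rewrite gbig ?mulr0 //; lia.
  rewrite (shift_sum u (fun m => g`_(2 * m + e).+1)); last by lia.
  by rewrite Szero ?mulr0 //; lia.
rewrite /Hpoly -[(\det _).[c]]/(horner_eval c (\det _)) -det_map_mx.
apply/eqP; rewrite -det_tr; apply/det0P.
have N0 : (0 < n - 2)%N by lia.
exists (\row_(l < n - 2) u ^+ l).
  apply/eqP => /rowP /(_ (Ordinal N0)); rewrite !mxE expr0 => /eqP.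
  by rewrite oner_eq0.
apply/rowP => rho; rewrite !mxE.
under eq_bigr => l _ do rewrite !mxE.
rewrite -(big_mkord xpredT (fun l => u ^+ l * (Mentry n f rho.+1 l.+1).[c])).
have hrlt := ltn_ord rho.
have [s [hr|hr]] : exists s, (rho = s.*2 :> nat) \/ (rho = s.*2.+1 :> nat).
  exists rho./2; have := odd_double_half rho.
  by case: (odd rho) => /= h; [right|left]; rewrite -{1}h.
- rewrite hr in hrlt *; rewrite -[RHS](rowz s 1%N) //; last by rewrite -mul2n in hrlt; lia.
  apply: eq_bigr => l _; rewrite /Mentry /= odd_double /=.
  rewrite phic (gamarg _ l s 1%N) // doubleK; lia.
- rewrite hr in hrlt *; rewrite -[RHS](rowz s 0%N) //; last by rewrite -mul2n in hrlt; lia.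
  apply: eq_bigr => l _; rewrite /Mentry /= odd_double /=.
  rewrite phic (gamarg _ l s 0%N) // doubleK; lia.
Qed.
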